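(* The InDC-BE method with $M$ uniform quadrature nodes excluding the left-most point and $K$ correction steps is an implicit Runge–Kutta method (with $(K+1)M$ stages) which is stiffly accurate and whose coefficient matrix $A$ in the Butcher tableau is invertible. In particular, for $K=1$ (normalizing the time step to $1$), $$A=\begin{pmatrix}T&Z\\P&T\end{pmatrix},$$ where $Z$ is the $M\times M$ zero matrix, $T$ is the $M\times M$ matrix with $T_{ij}=1/M$ for $j\le i$ and $T_{ij}=0$ for $j>i$, and $P_{ij}=\tilde S_{ij}-\frac1M$ for $j\le i$, $P_{ij}=\tilde S_{ij}$ for $j>i$.
   Context: InDC-BE for an ODE $y'=f(y)$ over one step of size $H$: nodes $\tau_m=t_n+mh$, $h=H/M$; $\alpha_j$ ($j=1,\dots,M$) the Lagrange basis polynomials of degree $M-1$ for $\tau_1,\dots,\tau_M$; $S^m(\bar w)=\frac1h\sum_jw_j\int_{\tau_m}^{\tau_{m+1}}\alpha_j$. Prediction: $y^{(0)}_{m+1}=y^{(0)}_m+hf(y^{(0)}_{m+1})$; correction: $y^{(k)}_{m+1}=y^{(k)}_m+h[f(y^{(k)}_{m+1})-f(y^{(k-1)}_{m+1})]+hS^m((f(y^{(k-1)}_j))_{j=1}^M)$, with $y^{(k)}_0=y_n$, output $y_{n+1}=y^{(K)}_M$. Viewed as an RK method, the stages are the values $y^{(k)}_m$, $k=0,\dots,K$, $m=1,\dots,M$. A RK method is stiffly accurate if $b^T$ equals the last row of $A$. $\tilde S_{ij}=\int_0^{i/M}\ell_j(s)\,ds$ where $\ell_j$ are the Lagrange basis polynomials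 of degree $M-1$ for the nodes $1/M,2/M,\dots,1$. *)

(* Defs.v *)
From HB Require Import structures.
From mathcomp Require Import all_boot all_order all_algebra.
Set Implicit Arguments. Unset Strict Implicit. Unset Printing Implicit Defensive.
Import Order.TTheory GRing.Theory Num.Theory.
Local Open Scope ring_scope.

Section InDC.
Variable R : realFieldType.

Definition poly_antideriv (p : {poly R}) : {poly R} :=
  \poly_(i < (size p).+1) (if i is i'.+1 then p`_i' / i%:R else 0).

Definition poly_integral (p : {poly R}) (a b : R) : R :=
  (poly_antideriv p).[b] - (poly_antideriv p).[a].

Definition lagrange_basis (M : nat) (x : 'I_M -> R) (j : 'I_M) : {poly R} :=
  \prod_(i < M | i != j) ((x j - x i)^-1 *: ('X - (x i)%:P)).

Definition tau (M : nat) (tn H : R) (m : nat) : R := tn + m%:R * (H / M%:R).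

(* alpha_j, j = 1..M (0-based index j : 'I_M stands for node tau_(j+1)). *)
Definition alpha (M : nat) (tn H : R) (j : 'I_M) : {poly R} :=
  lagrange_basis (fun i : 'I_M => tau M tn H i.+1) j.

Definition Sop (M : nat) (tn H : R) (m : nat) (w : 'I_M -> R) : R :=
  (H / M%:R)^-1 * \sum_(j < M) w j * poly_integral (alpha tn H j) (tau M tn H m) (tau M tn H m.+1).

(* The InDC-BE equations over one step.  Y k j is y^{(k)}_{j+1}
   (k = 0..K, j = 0..M-1); y^{(k)}_0 = yn. *)
Definition indc_prev (M K : nat) (yn : R) (Y : 'I_K.+1 -> 'I_M -> R)
    (k : 'I_K.+1) (j : 'I_M) : R :=
  match j with
  | Ordinal 0 _ => yn
  | Ordinal j'.+1 Hj => Y k (Ordinal (ltnW Hj))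
  end.

Definition InDC_BE (M K : nat) (f : R -> R) (tn H yn : R)
    (Y : 'I_K.+1 -> 'I_M -> R) : Prop :=
  let h := H / M%:R in
  (forall j : 'I_M, Y ord0 j = indc_prev yn Y ord0 j + h * f (Y ord0 j)) /\
  (forall (k : 'I_K) (j : 'I_M),
     Y (lift ord0 k) j = indc_prev yn Y (lift ord0 k) j
        + h * (f (Y (lift ord0 k) j) - f (Y (widen_ord (leqnSn K) k) j))
        + h * Sop tn H j (fun i => f (Y (widen_ord (leqnSn K) k) i))).

(* Stage equations of an RK method with coefficient matrix A, the stages being
   ordered as (k, m) |-> k * M + m (i.e. mxvec_index k m). *)
Definition RK_stages (M K : nat) (A : 'M[R]_(K.+1 * M)) (f : R -> R) (H yn : R)
    (Y : 'I_K.+1 -> 'I_M -> R) : Prop :=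
  forall (k : 'I_K.+1) (i : 'I_M),
    Y k i = yn + H * \sum_(l < K.+1) \sum_(j < M)
                       A (mxvec_index k i) (mxvec_index l j) * f (Y l j).

Definition RK_output (M K : nat) (b : 'rV[R]_(K.+1 * M)) (f : R -> R) (H yn : R)
    (Y : 'I_K.+1 -> 'I_M -> R) : R :=
  yn + H * \sum_(l < K.+1) \sum_(j < M) b 0 (mxvec_index l j) * f (Y l j).

(* Normalized Lagrange basis l_j for nodes 1/M, ..., M/M and
   tilde S_{ij} = int_0^{i/M} l_j  (0-based: row i stands for i+1). *)
Definition ell (M : nat) (j : 'I_M) : {poly R} :=
  lagrange_basis (fun i : 'I_M => i.+1%:R / M%:R) j.

Definition Stilde (M : nat) (i j : 'I_M) : R :=
  poly_integral (ell j) 0 (i.+1%:R / M%:R).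

Definition Tmat (M : nat) (i j : 'I_M) : R := if (j <= i)%N then M%:R^-1 else 0.

Definition Pmat (M : nat) (i j : 'I_M) : R :=
  if (j <= i)%N then Stilde i j - M%:R^-1 else Stilde i j.

Definition blockA1 (M : nat) (k l : nat) (i j : 'I_M) : R :=
  if k == l then Tmat i j
  else if (k == 1%N) && (l == 0%N) then Pmat i j else 0.

End InDC.

(* Main.v *)
Require Import Defs.
From HB Require Import structures.
From mathcomp Require Import all_boot all_order all_algebra.
From mathcomp Require Import ring lra zify.
Import Order.TTheory GRing.Theory Num.Theory.
Local Open Scope ring_scope.

Lemma index_allpairs (S T : eqType) (s : seq S) (t : seq T) x y :
  x \in s -> y \in t ->
  index (x, y) [seq (a, b) | a <- s, b <- t] = (index x s * size t + index y t)%N.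
Proof.
move=> xs yt; elim: s xs => [//|a s IH] /=.
rewrite index_cat in_cons.
case: (eqVneq x a) => [->|nxa] /=; first move=> _.
  have inj : injective (fun b : T => (a, b)) by move=> b b' [].
  by rewrite index_map // (map_f (fun b => (a,b)) yt) mul0n add0n.
move=> xs; have -> : (x, y) \in [seq (a, b0) | b0 <- t] = false.
  by apply/negbTE/mapP => -[b _ [E _]]; rewrite E eqxx in nxa.
by rewrite IH // size_map mulSn addnA.
Qed.

Lemma val_mxvec_index m n (i : 'I_m) (j : 'I_n) :
  val (mxvec_index i j) = (i * n + j)%N.
Proof.
rewrite /mxvec_index /=.
have E := nth_enum_rank (i, j) (i, j).
have U := enum_uniq {: 'I_m * 'I_n}.
have : index (i, j) (enum {: 'I_m * 'I_n}) = enum_rank (i, j).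
  by rewrite -{1}E index_uniq // -cardT.
move=> <-; rewrite enumT unlock /= /prod_enum index_allpairs ?mem_enum //.
by rewrite !index_enum_ord size_enum_ord.
Qed.
Section Aux.
Variable R : realFieldType.
Implicit Types p q : {poly R}.

Lemma deriv_antideriv p : (poly_antideriv p)^`() = p.
Proof.
apply/polyP => i; rewrite coef_deriv coef_poly ltnS /=.
case: ltnP => Hi.
  by rewrite -[_ *+ i.+1]mulr_natr divfK // pnatr_eq0.
by rewrite mul0rn nth_default.
Qed.

Lemma deriv0_const p : p^`() = 0 -> forall a b, p.[a] = p.[b].
Proof.
move=> D a b; have -> : p = (p`_0)%:P; last by rewrite !hornerC.
apply/polyP => -[|i]; rewrite coefC //=.
have /eqP := congr1 (fun r : {poly R} => r`_i) D.
by rewrite coef_deriv coef0 mulrn_eq0 /= => /eqP.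
Qed.

Lemma integral_subst p c d u v : d != 0 ->
  poly_integral p (c + d * u) (c + d * v) =
  d * poly_integral (p \Po (c%:P + d *: 'X)) u v.
Proof.
move=> d0; set L := c%:P + d *: 'X.
set P := poly_antideriv p; set Q := poly_antideriv (p \Po L).
have HL x : L.[x] = c + d * x by rewrite /L hornerD hornerC hornerZ hornerX.
have HD : (P \Po L - d *: Q)^`() = 0.
  rewrite derivB deriv_comp derivZ /Q /P !deriv_antideriv /L derivD derivC derivZ derivX.
  by rewrite add0r alg_polyC mulrC mul_polyC subrr.
have := deriv0_const _ HD u v.
rewrite !hornerD !hornerN !hornerZ !horner_comp !HL /poly_integral -/P -/Q.
move=> E; lra.
Qed.

Lemma sum_le_succ (n : nat) (d : 'I_n -> R) (i : nat) (Hi : (i.+1 < n)%N) :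
  \sum_(j < n | (j <= i.+1)%N) d j = \sum_(j < n | (j <= i)%N) d j + d (Ordinal Hi).
Proof.
rewrite (bigD1 (Ordinal Hi)) //= addrC; congr (_ + _); apply: eq_bigl => j.
rewrite -val_eqE /=; case: (eqVneq (val j) i.+1) => [->|ne]; first by rewrite ltnn andbF.
by rewrite andbT leq_eqVlt (negbTE ne).
Qed.

Lemma sum_le_0 (n : nat) (d : 'I_n -> R) (H0 : (0 < n)%N) :
  \sum_(j < n | (j <= 0)%N) d j = d (Ordinal H0).
Proof. by rewrite (big_pred1 (Ordinal H0)) // => j; rewrite /= leqn0 -val_eqE. Qed.

Lemma tele (M K : nat) (Y : 'I_K.+1 -> 'I_M -> R) (k : 'I_K.+1) (d : 'I_M -> R) yn :
  (forall j : 'I_M, Y k j = indc_prev yn Y k j + d j) <->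
  (forall i : 'I_M, Y k i = yn + \sum_(j < M | (j <= i)%N) d j).
Proof.
split=> Hy.
  case=> m; elim: m => [|m IH] Hm.
    by rewrite {1}Hy /= sum_le_0.
  by rewrite {1}Hy /= (IH (ltnW Hm)) sum_le_succ addrA.
case=> m; case: m => [|m] Hm.
  by rewrite {1}Hy /= sum_le_0.
by rewrite {1}Hy /= (Hy (Ordinal (ltnW Hm))) /= sum_le_succ addrA.
Qed.
End Aux.
Lemma alpha_comp (R : realFieldType) (M : nat) (tn H : R) (j : 'I_M) : H != 0 ->
  alpha tn H j \Po (tn%:P + H *: 'X) = ell R j.
Proof.
move=> H0; rewrite /alpha /ell /lagrange_basis rmorph_prod /=.
apply: eq_bigr => i _; rewrite comp_polyZ comp_polyB comp_polyX comp_polyC.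
rewrite /tau.
have -> : tn%:P + H *: 'X - (tn + i.+1%:R * (H / M%:R))%:P =
          H *: ('X - (i.+1%:R / M%:R)%:P).
  rewrite -!mul_polyC !(rmorphD, rmorphB, rmorphM) /=. ring.
rewrite scalerA; congr (_ *: _).
have -> : tn + j.+1%:R * (H / M%:R) - (tn + i.+1%:R * (H / M%:R)) =
          H * (j.+1%:R / M%:R - i.+1%:R / M%:R) by ring.
by rewrite invfM mulrAC mulVf // mul1r.
Qed.

Lemma Sop_sum (R : realFieldType) (M : nat) (tn H : R) (w : 'I_M -> R) (i : 'I_M) :
  H != 0 -> (0 < M)%N ->
  \sum_(m < M | (m <= i)%N) (H / M%:R) * Sop tn H m w =
  H * \sum_(j < M) w j * Stilde R i j.
Proof.
move=> H0 M0.
have h0 : H / M%:R != 0 by rewrite mulf_neq0 // invr_eq0 pnatr_eq0 -lt0n.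
rewrite /Sop; under eq_bigr => m _ do rewrite mulVKf //.
rewrite exchange_big mulr_sumr; apply: eq_bigr => j _.
rewrite -mulr_sumr mulrCA; congr (w j * _).
rewrite (eq_bigl (fun m : 'I_M => (m < i.+1)%N)) // -(big_ord_widen M (fun m => poly_integral (alpha tn H j) (tau M tn H m) (tau M tn H m.+1)) (ltn_ord i)).
rewrite -(big_mkord xpredT (fun m => poly_integral (alpha tn H j) (tau M tn H m) (tau M tn H m.+1))) /poly_integral.
rewrite (telescope_sumr (fun m => (poly_antideriv (alpha tn H j)).[tau M tn H m])) //.
have -> : tau M tn H 0 = tn + H * 0 by rewrite /tau mul0r mulr0.
have -> : tau M tn H i.+1 = tn + H * (i.+1%:R / M%:R) by rewrite /tau; ring.
by rewrite -/(poly_integral _ _ _) integral_subst // alpha_comp.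
Qed.

Section Main.
Variable R : realFieldType.

Definition Aent {M : nat} (k l : nat) (i j : 'I_M) : R :=
  if (k == l)%N then Tmat R i j else if (k == l.+1)%N then Pmat R i j else 0.

Definition Amx (K M : nat) : 'M[R]_(K.+1 * M) :=
  \matrix_(p, q) (let x := enum_val (cast_ord (esym (@mxvec_cast K.+1 M)) p) in
                  let y := enum_val (cast_ord (esym (@mxvec_cast K.+1 M)) q) in
                  Aent (val x.1) (val y.1) x.2 y.2).

Lemma AmxE K M k i l j : @Amx K M (mxvec_index k i) (mxvec_index l j) = Aent k l i j.
Proof. by rewrite mxE /mxvec_index !cast_ordK !enum_rankK. Qed.

Lemma PmatE M (i j : 'I_M) : Pmat R i j = Stilde R i j - Tmat R i j.
Proof. by rewrite /Pmat /Tmat; case: ifP; rewrite ?subr0. Qed.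

Lemma sumT M (H : R) (g : 'I_M -> R) (i : 'I_M) :
  H * \sum_(j < M) Tmat R i j * g j = \sum_(j < M | (j <= i)%N) H / M%:R * g j.
Proof.
rewrite mulr_sumr [RHS]big_mkcond /=; apply: eq_bigr => j _.
by rewrite /Tmat; case: ifP => _; rewrite ?mul0r ?mulr0 // mulrA.
Qed.

Lemma sumA0 K M (F : 'I_K.+1 -> 'I_M -> R) (i : 'I_M) :
  \sum_(l < K.+1) \sum_(j < M) Aent 0 l i j * F l j = \sum_(j < M) Tmat R i j * F ord0 j.
Proof.
rewrite (bigD1 ord0) //=.
rewrite [X in _ + X]big1 ?addr0 => [|l /negbTE Hl].
  by apply: eq_bigr => j _; rewrite /Aent eqxx.
apply: big1 => j _; rewrite /Aent.
have -> : (0 == l)%N = false by rewrite eq_sym; apply: Hl.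
by rewrite mul0r.
Qed.

Lemma sumAS K M (F : 'I_K.+1 -> 'I_M -> R) (k : 'I_K) (i : 'I_M) :
  \sum_(l < K.+1) \sum_(j < M) Aent k.+1 l i j * F l j =
  \sum_(j < M) Tmat R i j * F (lift ord0 k) j +
  \sum_(j < M) Pmat R i j * F (widen_ord (leqnSn K) k) j.
Proof.
have Hne : widen_ord (leqnSn K) k != lift ord0 k.
  by apply/eqP => /(congr1 val); rewrite /= /bump /= add1n; lia.
rewrite (bigD1 (lift ord0 k)) //= (bigD1 (widen_ord (leqnSn K) k)) //=.
rewrite [X in _ + (_ + X)]big1 ?addr0 => [|l /andP [Hl1 Hl2]].
  have Eb : bump 0 k = k.+1 by rewrite /bump leq0n.
  congr (_ + _); apply: eq_bigr => j _; rewrite /Aent /= ?Eb eqxx //.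
  by have -> : (k.+1 == k)%N = false by lia.
apply: big1 => j _; rewrite /Aent.
have -> : (k.+1 == l)%N = false.
  by apply/negbTE; apply: contra Hl1 => /eqP E; apply/eqP/val_inj; rewrite /= /bump leq0n -E.
have -> : (k.+1 == l.+1)%N = false.
  by rewrite eqSS; apply/negbTE; apply: contra Hl2 => /eqP E; apply/eqP/val_inj; rewrite /= E.
by rewrite mul0r.
Qed.
End Main.

Lemma stepS (R : realFieldType) (M K : nat) (tn H : R) (F : 'I_K.+1 -> 'I_M -> R) (k : 'I_K) (i : 'I_M) :
  H != 0 -> (0 < M)%N ->
  \sum_(j < M | (j <= i)%N)
     (H / M%:R * (F (lift ord0 k) j - F (widen_ord (leqnSn K) k) j) +
      H / M%:R * Sop tn H j (F (widen_ord (leqnSn K) k))) =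
  H * \sum_(l < K.+1) \sum_(j < M) Aent R (lift ord0 k) l i j * F l j.
Proof.
move=> H0 M0.
have Eb : nat_of_ord (lift ord0 k) = k.+1 by rewrite /= /bump leq0n.
rewrite Eb sumAS mulrDr sumT big_split /= Sop_sum //.
under [X in _ = _ + _ * X]eq_bigr => j _ do rewrite PmatE mulrBl.
rewrite sumrB mulrBr sumT.
under eq_bigr => j _ do rewrite mulrBr.
rewrite sumrB.
have -> : \sum_(j < M) F (widen_ord (leqnSn K) k) j * Stilde R i j =
          \sum_(j < M) Stilde R i j * F (widen_ord (leqnSn K) k) j.
  by apply: eq_bigr => j _; rewrite mulrC.
lra.
Qed.

Theorem proposition4p1 (R : realFieldType) (M K : nat) (HM : (0 < M)%N) :
  exists (A : 'M[R]_(K.+1 * M)) (b : 'rV[R]_(K.+1 * M)),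
    (forall (f : R -> R) (tn H yn : R) (Y : 'I_K.+1 -> 'I_M -> R), 0 < H ->
       (InDC_BE f tn H yn Y <-> RK_stages A f H yn Y) /\
       (InDC_BE f tn H yn Y ->
          forall jlast : 'I_M, val jlast = M.-1 ->
            RK_output b f H yn Y = Y ord_max jlast)) /\
    (forall jlast : 'I_M, val jlast = M.-1 -> b = row (mxvec_index ord_max jlast) A) /\
    A \in unitmx /\
    (K = 1%N -> forall (k l : 'I_K.+1) (i j : 'I_M),
        A (mxvec_index k i) (mxvec_index l j) = @blockA1 R M k l i j).
Proof.
have Hlast : (M.-1 < M)%N by rewrite prednK.
set last := Ordinal Hlast.
have Elast : forall jl : 'I_M, val jl = M.-1 -> jl = last by move=> jl E; apply: val_inj.
set A := @Amx R K M.
have Hequiv : forall (f : R -> R) (tn H yn : R) (Y : 'I_K.+1 -> 'I_M -> R), 0 < H ->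
    (InDC_BE f tn H yn Y <-> RK_stages A f H yn Y).
  move=> f tn H yn Y Hpos.
  have H0 : H != 0 by rewrite gt_eqF.
  set F := fun l j => f (Y l j).
  have RKE : RK_stages A f H yn Y <->
     forall k i, Y k i = yn + H * \sum_(l < K.+1) \sum_(j < M) Aent R k l i j * F l j.
    split=> Hy k i; rewrite Hy; congr (_ + _ * _);
      by apply: eq_bigr => l _; apply: eq_bigr => j _; rewrite /A AmxE.
  rewrite RKE /InDC_BE /=.
  have split_k : forall P : 'I_K.+1 -> Prop,
      (forall k, P k) <-> (P ord0 /\ forall k : 'I_K, P (lift ord0 k)).
    move=> P; split=> [Hk|[H1 H2] k]; first by split.
    by case: (unliftP ord0 k) => [k' ->|->].
  rewrite (split_k (fun k => forall i, _)).
  split=> -[H1 H2]; split.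
  - move/(@tele R M K Y ord0 (fun j => H / M%:R * F ord0 j) yn): H1 => H1 i.
    by rewrite H1 sumA0 sumT.
  - move=> k.
    have : forall j, Y (lift ord0 k) j = indc_prev yn Y (lift ord0 k) j +
      (H / M%:R * (F (lift ord0 k) j - F (widen_ord (leqnSn K) k) j)
                          + H / M%:R * Sop tn H j (F (widen_ord (leqnSn K) k))).
      by move=> j; rewrite addrA; apply: H2.
    move/(@tele R M K Y (lift ord0 k) (fun j => H / M%:R * (F (lift ord0 k) j - F (widen_ord (leqnSn K) k) j)
                          + H / M%:R * Sop tn H j (F (widen_ord (leqnSn K) k))) yn) => Hk i.
    by rewrite Hk stepS.
  - apply/(@tele R M K Y ord0 (fun j => H / M%:R * F ord0 j) yn) => i.
    by rewrite H1 sumA0 sumT.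
  - move=> k j; rewrite -addrA; move: j.
    apply/(@tele R M K Y (lift ord0 k) (fun j => H / M%:R * (F (lift ord0 k) j - F (widen_ord (leqnSn K) k) j)
                          + H / M%:R * Sop tn H j (F (widen_ord (leqnSn K) k))) yn) => i.
    by rewrite H2 stepS.
set b := row (mxvec_index ord_max last) A.
have Hb : forall jl : 'I_M, val jl = M.-1 -> b = row (mxvec_index ord_max jl) A.
  by move=> jl /Elast ->.
exists A, b; split; [|split; [exact: Hb|split]].
- move=> f tn H yn Y Hpos; split; first exact: Hequiv.
  move=> /(Hequiv _ _ _ _ _ Hpos) RKs jl /Elast ->.
  rewrite (RKs ord_max last) /RK_output; congr (_ + _ * _).
  by apply: eq_bigr => l _; apply: eq_bigr => j _; rewrite /b mxE.
- rewrite unitmxE unitfE.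
  have /is_trig_mxP Htrig : is_trig_mx A.
    apply/is_trig_mxP => p q; case/mxvec_indexP: p => k i; case/mxvec_indexP: q => l j.
    rewrite !val_mxvec_index => lt; rewrite /A AmxE /Aent.
    case: (eqVneq (k : nat) l) => [E|NE].
      rewrite E ltn_add2l in lt; by rewrite /Tmat leqNgt lt.
    case: (eqVneq (k : nat) l.+1) => [E2|_]; last by [].
    exfalso; rewrite E2 mulSn in lt; have := ltn_ord j; lia.
  rewrite det_trig; last by apply/is_trig_mxP.
  apply/prodf_neq0 => p _; case/mxvec_indexP: p => k i.
  by rewrite /A AmxE /Aent eqxx /Tmat leqnn invr_eq0 pnatr_eq0 -lt0n.
- move=> K1 k l i j; rewrite /A AmxE /Aent /blockA1.
  subst K; case: k => -[|[|k]] Hk //; case: l => -[|[|l]] Hl //.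
Qed.
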